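(* Let $G=(V,E)$ be a graph on $n$ vertices and $\mathbb{F}$ a field. If there is a proper coloring $c:V\to[m]$ of $G$ with locality $\ell$ and $|\mathbb{F}|\ge m$, then $\mathrm{minrk}_{\mathbb{F}}(\overline{G})\le\ell$. In particular, if $|\mathbb{F}|\ge n$, then $\mathrm{minrk}_{\mathbb{F}}(\overline{G})\le\chi_l(G)$.
   Context: $\overline{G}$ is the complement of $G$. The locality of a proper coloring is the maximum over vertices $v$ of the number of distinct colors on the closed neighborhood $\{v\}\cup N(v)$; $\chi_l(G)$ is the minimum locality of a proper coloring of $G$. For a graph $H$ on $[n]$, a matrix $M\in\mathbb{F}^{n\times n}$ represents $H$ if $M_{i,i}\ne0$ for all $i$ and $M_{i,j}=0$ for distinct non-adjacent $i,j$; $\mathrm{minrk}_{\mathbb{F}}(H)$ is the minimum rank of such a matrix. *)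

(* Defs.v *)
From mathcomp Require Import all_boot all_order all_algebra.
From Stdlib Require Import ClassicalEpsilon.
Set Implicit Arguments. Unset Strict Implicit. Unset Printing Implicit Defensive.
Import GRing.Theory.
Local Open Scope ring_scope.

Definition pb (P : Prop) : bool :=
  if excluded_middle_informative P then true else false.
Lemma pbP (P : Prop) : pb P <-> P.
Proof. by rewrite /pb; case: excluded_middle_informative. Qed.

Definition simple_graph (n : nat) (e : rel 'I_n) : Prop :=
  symmetric e /\ irreflexive e.

Definition compl_graph (n : nat) (e : rel 'I_n) : rel 'I_n :=
  fun i j => (i != j) && ~~ e i j.

Definition proper_coloring (n m : nat) (e : rel 'I_n) (c : 'I_n -> 'I_m) : Prop :=
  forall u v, e u v -> c u != c v.

Definition closed_nbhd (n : nat) (e : rel 'I_n) (v : 'I_n) : {set 'I_n} :=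
  [set u | (u == v) || e v u].

Definition locality (n m : nat) (e : rel 'I_n) (c : 'I_n -> 'I_m) : nat :=
  \max_(v : 'I_n) #|[set c u | u in closed_nbhd e v]|.

(* chi_l(G): minimum locality of a proper colouring of G (when G has a
   proper colouring, which is always the case for a simple graph; the
   fallback value 0 is never used under the simple-graph hypothesis). *)
Definition has_coloring_of_locality (n : nat) (e : rel 'I_n) (l : nat) : Prop :=
  exists (m : nat) (c : 'I_n -> 'I_m), proper_coloring e c /\ locality e c = l.

Definition chi_l (n : nat) (e : rel 'I_n) : nat :=
  match excluded_middle_informative
          (exists l, pb (has_coloring_of_locality e l)) with
  | left h => ex_minn h
  | right _ => 0%N
  end.

Definition represents (F : fieldType) (n : nat) (H : rel 'I_n) (M : 'M[F]_n) : Prop :=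
  (forall i, M i i != 0) /\ (forall i j, i != j -> ~~ H i j -> M i j = 0).

Lemma minrk_ex (F : fieldType) (n : nat) (H : rel 'I_n) :
  exists r, pb (exists M : 'M[F]_n, represents H M /\ \rank M = r).
Proof.
exists (\rank (1%:M : 'M[F]_n)); apply/pbP; exists 1%:M; split => //; split.
- by move=> i; rewrite mxE eqxx oner_eq0.
- by move=> i j /negbTE ij _; rewrite mxE ij.
Qed.

Definition minrk (F : fieldType) (n : nat) (H : rel 'I_n) : nat :=
  ex_minn (minrk_ex F H).

(* Main.v *)
Require Import Defs.
From mathcomp Require Import all_boot all_order all_algebra.
From Stdlib Require Import ClassicalEpsilon.
Set Implicit Arguments. Unset Strict Implicit. Unset Printing Implicit Defensive.
Import GRing.Theory.

Lemma core (F : fieldType) (n m : nat) (e : rel 'I_n) (c : 'I_n -> 'I_m)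
  (f : 'I_m -> F) :
  symmetric e -> proper_coloring e c ->
  (forall u w, f (c u) = f (c w) -> c u = c w) ->
  (minrk F (compl_graph e) <= locality e c)%N.
Proof.
move=> esym pc finj.
set l := locality e c.
pose S v := [set c u | u in closed_nbhd e v] :\ c v.
pose p v : {poly F} := (\prod_(x <- map f (enum (S v))) ('X - x%:P))%R.
have szp v : (size (p v) <= l)%N.
  rewrite size_prod_XsubC size_map -cardE.
  have cv : c v \in [set c u | u in closed_nbhd e v].
    by apply: imset_f; rewrite inE eqxx.
  have := @leq_bigmax _ (fun v => #|[set c u | u in closed_nbhd e v]|) v.
  by rewrite (cardsD1 (c v)) cv.
pose X := (\matrix_(u < n, i < l) (f (c u)) ^+ i)%R.
pose Y := (\matrix_(i < l, v < n) (p v)`_i)%R.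
have ME u v : (X *m Y)%R u v = (p v).[f (c u)]%R.
  rewrite !mxE (horner_coef_wide _ (szp v)).
  by apply: eq_bigr => i _; rewrite !mxE mulrC.
have rep : represents (compl_graph e) (X *m Y)%R.
  split.
  - move=> v; rewrite ME -rootE root_prod_XsubC.
    apply/negP => /mapP [k]; rewrite mem_enum => kS fk.
    move: kS; rewrite !inE => /andP [kv /imsetP [w _ kw]].
    have : c w = c v by apply: finj; rewrite -kw fk.
    by move=> cwv; move: kv; rewrite kw cwv eqxx.
  - move=> i j ij; rewrite /compl_graph ij /= negbK => eij.
    apply/eqP; rewrite ME -rootE root_prod_XsubC.
    apply: map_f; rewrite mem_enum !inE (pc _ _ eij) /=.
    by apply: imset_f; rewrite inE esym eij orbT.
rewrite /minrk; case: ex_minnP => r _ /(_ (\rank (X *m Y)%R)) H.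
apply: leq_trans (H _) _.
  by apply/pbP; exists (X *m Y)%R.
exact: leq_trans (mxrankM_maxl _ _) (rank_leq_col _).
Qed.

(* |F| >= k is expressed as: there is an injection 'I_k -> F. *)
Theorem mainTheorem11 (F : fieldType) (n : nat) (e : rel 'I_n) :
  simple_graph e ->
  (forall (m : nat) (c : 'I_n -> 'I_m) (l : nat),
      proper_coloring e c -> locality e c = l ->
      (exists f : 'I_m -> F, injective f) ->
      (minrk F (compl_graph e) <= l)%N)
  /\
  ((exists f : 'I_n -> F, injective f) ->
      (minrk F (compl_graph e) <= chi_l e)%N).
Proof.
move=> [esym eirr]; split.
  move=> m c l pc <- [f finj]; apply: (core (f := f)) => [|//|u w /finj //].
  exact: esym.
move=> [f0 f0inj].
rewrite /chi_l; case: excluded_middle_informative => [h|hn]; last first.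
  exfalso; apply: hn; exists (locality e (@id 'I_n)); apply/pbP.
  exists n, id; split; last reflexivity.
  move=> u v euv; apply/eqP => uv.
  by move: euv; rewrite uv eirr.
case: (ex_minnP h) => l /pbP [m [c [pc <-]]] _.
pose g (k : 'I_m) : F := if [pick u | c u == k] is Some u then f0 u else 0%R.
apply: (core (f := g)); [exact: esym|exact: pc|move=> u w].
rewrite /g; case: pickP => [u' /eqP hu|]; last by move=> /(_ u); rewrite eqxx.
case: pickP => [w' /eqP hw|]; last by move=> /(_ w); rewrite eqxx.
by move=> /f0inj uw; rewrite -hu -hw uw.
Qed.
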